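(* Let $F$ be a generic, supertransversal fully-connected ReLU network with input dimension $n_0$, and let $C$ be a $k$-dimensional cell of $\mathcal{C}(F)$. Then the sign sequence $s(C)$ has exactly $n_0-k$ entries equal to zero; that is, $C$ is contained in the intersection of exactly $n_0-k$ bent hyperplanes.
   Context: A ReLU network of architecture $(n_0,\dots,n_m,1)$: affine maps $A_i:\mathbb{R}^{n_{i-1}}\to\mathbb{R}^{n_i}$, $1\le i\le m+1$, $n_{m+1}=1$; $F_i=\mathrm{ReLU}\circ A_i$ ($i\le m$), $G=A_{m+1}$, $F=G\circ F_m\circ\cdots\circ F_1$, $F_{(k)}=F_k\circ\cdots\circ F_1$ ($F_{(0)}=\mathrm{id}$), $F^{(k)}=G\circ F_m\circ\cdots\circ F_k:\mathbb{R}^{n_{k-1}}\to\mathbb{R}$ ($F^{(m+1)}=G$). Node maps $F_{ij}=\pi_j\circ A_i\circ F_{(i-1)}$, $1\le i\le m+1$, $1\le j\le n_i$; $N=n_1+\dots+n_m+1$. A bent hyperplane is a set $F_{ij}^{-1}(0)$. Polyhedra are finite intersections of closed half-spaces; $C^\circ$ is the relative interior. $R^{(i)}$ is the polyhedral complex on $\mathbb{R}^{n_{i-1}}$ induced by the hyperplanes $H_{ij}=\{\pi_jA_i=0\}$, $1\le j\le n_i$ (cells: nonempty intersections of one choice among $\{\pi_jA_i\ge0\},\{\pi_jA_i\le0\},\{\pi_jA_i=0\}$ for each $j$). Canonical polyhedral complex: $\mathcal{C}(F_{(1)})=R^{(1)}$, $\mathcal{C}(F_{(k)})=\{C\cap F_{(k-1)}^{-1}(R)\neq\emptyset: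 C\in\mathcal{C}(F_{(k-1)}),R\in R^{(k)}\}$, $2\le k\le m+1$; $\mathcal{C}(F)$ is the last one. The same construction for $F^{(k)}$ gives $\mathcal{C}(F^{(k)})$ on $\mathbb{R}^{n_{k-1}}$, with $\mathcal{C}(F^{(m+1)})=R^{(m+1)}$. Sign sequence: $s_{ij}(C)=\mathrm{sgn}(F_{ij}(x))$ for $x\in C^\circ$. Generic: for every $i$, any $k$ of the hyperplanes $H_{i1},\dots,H_{in_i}$ intersect in an affine subspace of dimension $n_{i-1}-k$ (empty if $k>n_{i-1}$). A map affine on cells of a polyhedral complex $X$ is transverse on cells of $X$ to a submanifold $Z$ if its restriction to $C^\circ$ is transverse to $Z$ for every cell $C$ of $X$. Supertransversal: for every $1\le i\le m$, $F_i$ is transverse on cells of $R^{(i)}$ to the interior of every cell of $\mathcal{C}(F^{(i+1)})$. *)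

(* Defs.v *)
From HB Require Import structures.
From mathcomp Require Import all_boot all_order all_algebra.
From mathcomp Require Import boolp classical_sets reals.
Unset Printing Implicit Defensive.
Import Order.TTheory GRing.Theory Num.Theory.
Local Open Scope classical_set_scope.
Local Open Scope ring_scope.

Section Geometry.
Variables (R : realType) (p : nat).

Definition lin_span (T : set 'rV[R]_p) : set 'rV[R]_p :=
  [set v | exists (q : nat) (vs : 'I_q -> 'rV[R]_p) (a : 'I_q -> R),
      (forall i, T (vs i)) /\ v = \sum_(i < q) a i *: vs i].

Definition dir_span (S : set 'rV[R]_p) : set 'rV[R]_p :=
  lin_span [set v | exists x y, S x /\ S y /\ v = y - x].

Definition aff_hull (S : set 'rV[R]_p) : set 'rV[R]_p :=
  [set y | exists x, S x /\ dir_span S (y - x)].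

Definition relint (S : set 'rV[R]_p) : set 'rV[R]_p :=
  [set x | S x /\ exists e : R, 0 < e /\
     forall y, aff_hull S y -> (forall j, `|y ord0 j - x ord0 j| < e) -> S y].

Definition has_dim (S : set 'rV[R]_p) (k : nat) : Prop :=
  exists B : 'M[R]_(k, p), row_free B /\ forall v, dir_span S v <-> (v <= B)%MS.

Definition affdim (S : set 'rV[R]_p) (k : nat) : Prop :=
  (exists x, S x) /\ has_dim S k.

End Geometry.
Arguments lin_span {R p}.
Arguments dir_span {R p}.
Arguments aff_hull {R p}.
Arguments relint {R p}.
Arguments has_dim {R p}.
Arguments affdim {R p}.

(* Transversality, on a cell C, of a map f that is affine on C, to a
   submanifold Z which is a relatively open subset of an affine subspace
   (the relative interior of a polyhedron): for every x in C° with f x in Z,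
   the image of the differential of f|C° at x (= the direction space of the
   affine hull of f(C°), f being affine on C) plus the tangent space of Z
   (= the direction space of the affine hull of Z) is the whole space. *)
Definition transverse_cell {R : realType} {p q : nat} (f : 'rV[R]_p -> 'rV[R]_q)
    (C : set 'rV[R]_p) (Z : set 'rV[R]_q) : Prop :=
  forall x, relint C x -> Z (f x) ->
    forall w : 'rV[R]_q, exists u v,
      dir_span (f @` relint C) u /\ dir_span Z v /\ w = u + v.

(* ReLU networks.  Layers are 0-indexed: the affine map of layer i     *)
(* (paper's A_{i+1}) goes from R^(n i) to R^(n i.+1),                  *)
(* x |-> x *m W i + b i; the network of architecture (n 0,...,n m, 1)  *)
(* uses layers 0..m, and layer m is G (no ReLU).                       *)
Section Network.
Variables (R : realType) (n : nat -> nat)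
  (W : forall i, 'M[R]_(n i, n i.+1)) (b : forall i, 'rV[R]_(n i.+1)).

Definition affmap (i : nat) (x : 'rV[R]_(n i)) : 'rV[R]_(n i.+1) := x *m W i + b i.

Definition relu {q : nat} (x : 'rV[R]_q) : 'rV[R]_q := map_mx (fun a => Num.max a 0) x.

Definition layer (i : nat) (x : 'rV[R]_(n i)) : 'rV[R]_(n i.+1) := relu (affmap i x).

Fixpoint Fpre (i : nat) : 'rV[R]_(n 0) -> 'rV[R]_(n i) :=
  match i return 'rV[R]_(n 0) -> 'rV[R]_(n i) with
  | 0 => id
  | i'.+1 => fun x => layer i' (Fpre i' x)
  end.

Fixpoint Fseg (s d : nat) : 'rV[R]_(n s) -> 'rV[R]_(n (d + s)) :=
  match d return 'rV[R]_(n s) -> 'rV[R]_(n (d + s)) with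
  | 0 => id
  | d'.+1 => fun x => layer (d' + s) (Fseg s d' x)
  end.

Inductive hchoice := HGe | HLe | HEq.

Definition hcell (i : nat) (sg : 'I_(n i.+1) -> hchoice) : set 'rV[R]_(n i) :=
  [set x | forall j, match sg j with
                     | HGe => is_true (0 <= affmap i x ord0 j)
                     | HLe => is_true (affmap i x ord0 j <= 0)
                     | HEq => affmap i x ord0 j = 0
                     end].

Definition Rarr (i : nat) : set (set 'rV[R]_(n i)) :=
  [set S | (exists sg, S = hcell i sg) /\ S !=set0].

(* cpx s t : canonical polyhedral complex of the composite of layers
   s, ..., s+t-1 (the last one taken without its ReLU), on R^(n s).
   cpx s 0 is the trivial complex {R^(n s)}, so cpx s 1 = Rarr s. *)
Fixpoint cpx (s t : nat) : set (set 'rV[R]_(n s)) :=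
  match t with
  | 0 => [set setT]
  | t'.+1 => [set S | exists C Rc, cpx s t' C /\ Rarr (t' + s) Rc /\
                 S = C `&` (Fseg s t') @^-1` Rc /\ S !=set0]
  end.

Definition canon_cpx (m : nat) : set (set 'rV[R]_(n 0)) := cpx 0 m.+1.

Definition node_map (i : nat) (j : 'I_(n i.+1)) (x : 'rV[R]_(n 0)) : R :=
  affmap i (Fpre i x) ord0 j.

(* s_{(i+1) j}(C) = 0 : F_{(i+1) j} vanishes on C° *)
Definition sign_zero (C : set 'rV[R]_(n 0)) (i : nat) (j : 'I_(n i.+1)) : Prop :=
  forall x, relint C x -> node_map i j x = 0.

Definition generic (m : nat) : Prop :=
  forall i, (i <= m)%N -> forall J : {set 'I_(n i.+1)},
    let X := [set x : 'rV[R]_(n i) | forall j, j \in J -> affmap i x ord0 j = 0] in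
    if (#|J| <= n i)%N then affdim X (n i - #|J|)%N else X = set0.

(* supertransversal: for every paper-index 1 <= i <= m (here l = i-1 < m),
   F_i is transverse on cells of R^(i) to the interior of every cell of
   C(F^(i+1)) = cpx (l+1) (m - l)  (layers l+1, ..., m). *)
Definition supertransversal (m : nat) : Prop :=
  forall l, (l < m)%N -> forall (C : set 'rV[R]_(n l)) (D : set 'rV[R]_(n l.+1)),
    Rarr l C -> cpx l.+1 (m - l) D -> transverse_cell (layer l) C (relint D).

End Network.
Arguments affmap {R n}.
Arguments layer {R n}.
Arguments Fpre {R n}.
Arguments Fseg {R n}.
Arguments hcell {R n}.
Arguments Rarr {R n}.
Arguments cpx {R n}.
Arguments canon_cpx {R n}.
Arguments node_map {R n}.
Arguments sign_zero {R n}.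
Arguments generic {R n}.
Arguments supertransversal {R n}.

(* Main.v *)
Require Import Defs.
From HB Require Import structures.
From mathcomp Require Import all_boot all_order all_algebra.
From mathcomp Require Import boolp classical_sets reals.
From mathcomp Require Import zify ring lra.
Unset Printing Implicit Defensive.
Import Order.TTheory GRing.Theory Num.Theory.
Local Open Scope classical_set_scope.
Local Open Scope ring_scope.

Section Net.
Variables (R : realType) (n : nat -> nat)
  (W : forall i, 'M[R]_(n i, n i.+1)) (b : forall i, 'rV[R]_(n i.+1)).

Definition nodeval (k : nat) (v : 'rV[R]_(n k)) (j : nat) : R :=
  \sum_(j' < n k.+1 | (j' : nat) == j) affmap W b k v ord0 j'.
Definition nodeval0 (k : nat) (v : 'rV[R]_(n k)) (j : nat) : R :=
  \sum_(j' < n k.+1 | (j' : nat) == j) (v *m W k) ord0 j'.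

Lemma nodevalE k v (j : 'I_(n k.+1)) : nodeval k v j = affmap W b k v ord0 j.
Proof. by rewrite /nodeval (big_pred1 j) // => j'; rewrite /= -val_eqE. Qed.
Lemma nodeval0E k v (j : 'I_(n k.+1)) : nodeval0 k v j = (v *m W k) ord0 j.
Proof. by rewrite /nodeval0 (big_pred1 j) // => j'; rewrite /= -val_eqE. Qed.

Lemma nodevalD k v u j : nodeval k (v + u) j = nodeval k v j + nodeval0 k u j.
Proof.
rewrite /nodeval /nodeval0 -big_split /=; apply: eq_bigr => j' _.
rewrite /affmap mulmxDl !mxE; ring.
Qed.
Lemma nodeval0L k a u u' j :
  nodeval0 k (a *: u + u') j = a * nodeval0 k u j + nodeval0 k u' j.
Proof.
rewrite /nodeval0 mulr_sumr -big_split /=; apply: eq_bigr => j' _.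
by rewrite mulmxDl -scalemxAl !mxE.
Qed.

Fixpoint Gen (lay : forall l, 'rV[R]_(n l) -> 'rV[R]_(n l.+1))
  (nv : forall l, 'rV[R]_(n l) -> nat -> R) (f l : nat) (y : 'rV[R]_(n l))
  (i j : nat) {struct f} : R :=
  if i == l then nv l y j else
  if f is f'.+1 then Gen lay nv f' l.+1 (lay l y) i j else 0.

Section GenL.
Variables (lay : forall l, 'rV[R]_(n l) -> 'rV[R]_(n l.+1))
  (nv : forall l, 'rV[R]_(n l) -> nat -> R).

Lemma Gen_lt f l y i j : (i < l)%N -> Gen lay nv f l y i j = 0.
Proof.
elim: f l y => [|f IH] l y H /=; rewrite ifN ?IH //; try lia.
all: by apply/eqP; lia.
Qed.

Lemma Gen_fuel f f' l y i j : (i <= l + f)%N -> (f <= f')%N ->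
  Gen lay nv f l y i j = Gen lay nv f' l y i j.
Proof.
elim: f f' l y => [|f IH] [|f'] l y H1 H2 /=; try lia.
- by [].
- case: eqP => // Hne; rewrite Gen_lt //; lia.
- case: eqP => // Hne; apply: IH; lia.
Qed.

Lemma Gen_eq f l y j : Gen lay nv f l y l j = nv l y j.
Proof. by case: f => [|f] /=; rewrite eqxx. Qed.

Lemma Gen_S f l y i j : i != l ->
  Gen lay nv f.+1 l y i j = Gen lay nv f l.+1 (lay l y) i j.
Proof. by move=> H /=; rewrite (negbTE H). Qed.
End GenL.

Lemma GenD (lay1 lay2 : forall l, 'rV[R]_(n l) -> 'rV[R]_(n l.+1))
  (nv1 nv2 : forall l, 'rV[R]_(n l) -> nat -> R) :
  (forall l y u, lay1 l (y + u) = lay1 l y + lay2 l u) ->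
  (forall l y u j, nv1 l (y + u) j = nv1 l y j + nv2 l u j) ->
  forall f l y u i j, Gen lay1 nv1 f l (y + u) i j =
     Gen lay1 nv1 f l y i j + Gen lay2 nv2 f l u i j.
Proof.
move=> Hl Hn; elim=> [|f IH] l y u i j /=; case: eqP => _ //; first by rewrite addr0.
by rewrite Hl IH.
Qed.

Lemma GenL (lay2 : forall l, 'rV[R]_(n l) -> 'rV[R]_(n l.+1))
  (nv2 : forall l, 'rV[R]_(n l) -> nat -> R) :
  (forall l a u u', lay2 l (a *: u + u') = a *: lay2 l u + lay2 l u') ->
  (forall l a u u' j, nv2 l (a *: u + u') j = a * nv2 l u j + nv2 l u' j) ->
  forall f l a u u' i j, Gen lay2 nv2 f l (a *: u + u') i j =
     a * Gen lay2 nv2 f l u i j + Gen lay2 nv2 f l u' i j.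
Proof.
move=> Hl Hn; elim=> [|f IH] l a u u' i j /=; case: eqP => _ //; first by rewrite mulr0 addr0.
by rewrite Hl IH.
Qed.

Definition Psi := Gen (layer W b) nodeval.
Definition diagd (d : nat -> nat -> bool) l : 'M[R]_(n l.+1) :=
  diag_mx (\row_j ((d l j)%:R : R)).
Definition linlayer d l (y : 'rV[R]_(n l)) : 'rV[R]_(n l.+1) := affmap W b l y *m diagd d l.
Definition linlayer0 d l (u : 'rV[R]_(n l)) : 'rV[R]_(n l.+1) := u *m W l *m diagd d l.
Definition Phi d := Gen (linlayer d) nodeval.
Definition Lam d := Gen (linlayer0 d) nodeval0.

Lemma PhiD d f l y u i j : Phi d f l (y + u) i j = Phi d f l y i j + Lam d f l u i j.
Proof.
apply: GenD => [l' y' u'|]; last exact: nodevalD.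
by rewrite /linlayer /linlayer0 /affmap -mulmxDl; congr (_ *m _); rewrite mulmxDl addrAC.
Qed.

Lemma LamL d f l a u u' i j :
  Lam d f l (a *: u + u') i j = a * Lam d f l u i j + Lam d f l u' i j.
Proof.
apply: GenL => [l' a' v v'|]; last exact: nodeval0L.
by rewrite /linlayer0 !mulmxDl -!scalemxAl.
Qed.

Lemma Lam0 d f l i j : Lam d f l 0 i j = 0.
Proof. by have := LamL d f l 1 0 0 i j; rewrite scale1r addr0 mul1r; lra. Qed.

Lemma LamN d f l u i j : Lam d f l (- u) i j = - Lam d f l u i j.
Proof.
by have := LamL d f l (-1) u 0 i j; rewrite addr0 Lam0 addr0 scaleN1r mulN1r.
Qed.

Lemma LamB d f l u u' i j : Lam d f l (u - u') i j = Lam d f l u i j - Lam d f l u' i j.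
Proof. by have := LamL d f l 1 u (- u') i j; rewrite scale1r mul1r LamN. Qed.

Lemma Lam_sum d f l i j q (a : 'I_q -> R) vs :
  Lam d f l (\sum_(k < q) a k *: vs k) i j = \sum_(k < q) a k * Lam d f l (vs k) i j.
Proof.
elim: q a vs => [|q IH] a vs; first by rewrite !big_ord0 Lam0.
by rewrite !big_ord_recr /= addrC LamL IH addrC.
Qed.

Lemma PhiB d f l y y' i j : Lam d f l (y' - y) i j = Phi d f l y' i j - Phi d f l y i j.
Proof. by have := PhiD d f l y (y' - y) i j; rewrite (addrC y) subrK => ->; ring. Qed.

Definition cons (c : bool) (v : R) : Prop := if c then 0 <= v else v <= 0.

Lemma relu_lin (d : nat -> nat -> bool) l y : (forall j : 'I_(n l.+1), cons (d l j) (affmap W b l y ord0 j)) ->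
  layer W b l y = linlayer d l y.
Proof.
move=> H; apply/rowP => j; move: (H j).
rewrite /layer /relu /linlayer /diagd mul_mx_diag /cons !mxE; case: (d l j) => /= Hj.
  by rewrite mulr1 max_l.
by rewrite mulr0 max_r.
Qed.

Lemma lin_okPsi (d : nat -> nat -> bool) f l y :
  (forall i j, (l <= i < l + f)%N -> (j < n i.+1)%N -> cons (d i j) (Psi f l y i j)) ->
  forall i j, (i <= l + f)%N -> Psi f l y i j = Phi d f l y i j.
Proof.
rewrite /Psi /Phi; elim: f l y => [|f IH] l y H i j Hi /=; case: eqP => // Hne.
have Hl : layer W b l y = linlayer d l y.
  apply: relu_lin => j'; have := H l j'; rewrite Gen_eq nodevalE; apply => //; lia.
rewrite Hl; apply: IH; last lia.
move=> i' j' Hi' Hj'; have := H i' j'; rewrite Gen_S ?Hl; last by apply/eqP; lia.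
apply => //; lia.
Qed.

Lemma lin_okPhi (d : nat -> nat -> bool) f l y :
  (forall i j, (l <= i < l + f)%N -> (j < n i.+1)%N -> cons (d i j) (Phi d f l y i j)) ->
  forall i j, (i <= l + f)%N -> Psi f l y i j = Phi d f l y i j.
Proof.
rewrite /Psi /Phi; elim: f l y => [|f IH] l y H i j Hi /=; case: eqP => // Hne.
have Hl : layer W b l y = linlayer d l y.
  apply: relu_lin => j'; have := H l j'; rewrite Gen_eq nodevalE; apply => //; lia.
rewrite Hl; apply: IH; last lia.
move=> i' j' Hi' Hj'; have := H i' j'; rewrite Gen_S; last by apply/eqP; lia.
apply => //; lia.
Qed.

Lemma PsiFpre f l x i j : (l <= i)%N -> (i <= l + f)%N ->
  Psi f l (Fpre W b l x) i j = nodeval i (Fpre W b i x) j.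
Proof.
rewrite /Psi; elim: f l => [|f IH] l H1 H2 /=; case: eqP => [->|Hne] //; try lia.
by apply: IH; lia.
Qed.


Definition hsat (c : hchoice) (v : R) : Prop :=
  match c with HGe => is_true (0 <= v) | HLe => is_true (v <= 0) | HEq => v = 0 end.

Definition NV (p : {k : nat & 'rV[R]_(n k)}) (j : nat) : R := nodeval (projT1 p) (projT2 p) j.

Lemma FsegS d s z : existT (fun k => 'rV[R]_(n k)) (d + s.+1)%N (Fseg W b s.+1 d (layer W b s z)) =
  existT (fun k => 'rV[R]_(n k)) (d.+1 + s)%N (Fseg W b s d.+1 z).
Proof.
elim: d => [|d IH] //.
pose g (p : {k : nat & 'rV[R]_(n k)}) := existT (fun k => 'rV[R]_(n k)) (projT1 p).+1 (layer W b (projT1 p) (projT2 p)).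
change (g (existT (fun k => 'rV[R]_(n k)) (d + s.+1)%N (Fseg W b s.+1 d (layer W b s z))) =
  g (existT (fun k => 'rV[R]_(n k)) (d.+1 + s)%N (Fseg W b s d.+1 z))).
by rewrite IH.
Qed.

Lemma PsiNV d s z f j : (d <= f)%N ->
  Psi f s z (d + s) j = NV (existT (fun k => 'rV[R]_(n k)) (d + s)%N (Fseg W b s d z)) j.
Proof.
elim: d s z f => [|d IH] s z f H; first exact: (Gen_eq (layer W b) nodeval f s z j).
case: f H => [|f] H //.
transitivity (Psi f s.+1 (layer W b s z) (d + s.+1) j).
  by rewrite /Psi Gen_S -?addSnnS //; apply/eqP; lia.
by rewrite IH ?FsegS //.
Qed.

Definition FsegSet s t (sg : nat -> nat -> hchoice) : set 'rV[R]_(n s) :=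
  [set z | forall d j, (d < t)%N -> (j < n (d + s).+1)%N ->
     hsat (sg d j) (NV (existT (fun k => 'rV[R]_(n k)) (d + s)%N (Fseg W b s d z)) j)].

Definition PsiSet s f (sg : nat -> nat -> hchoice) : set 'rV[R]_(n s) :=
  [set y | forall i j, (s <= i)%N -> (i <= s + f)%N -> (j < n i.+1)%N ->
     hsat (sg i j) (Psi f s y i j)].

Lemma PsiSet_Fseg s f sg : PsiSet s f sg = FsegSet s f.+1 (fun d j => sg (d + s)%N j).
Proof.
apply: funext => y; apply: propext; split => H.
  move=> d j Hd Hj; rewrite -(PsiNV _ _ _ f); last lia.
  apply: H => //; lia.
move=> i j H1 H2 Hj; have := H (i - s)%N j; rewrite -(PsiNV _ _ _ f) ?subnK //; last lia.
apply => //; lia.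
Qed.

Lemma FsegSet_ext s t sg sg' : (forall d j, (d < t)%N -> sg d j = sg' d j) ->
  FsegSet s t sg = FsegSet s t sg'.
Proof.
move=> E; apply: funext => z; apply: propext; split => H d j Hd Hj; move: (H d j Hd Hj);
  by rewrite E.
Qed.

Lemma FsegSetS s t sg : FsegSet s t.+1 sg =
  FsegSet s t sg `&` (Fseg W b s t) @^-1` (hcell W b (t + s) (fun j' => sg t j')).
Proof.
apply: funext => z; apply: propext; split.
  move=> H; split; first by move=> d j Hd Hj; apply: H => //; lia.
  move=> j'; have := H t j' (ltnSn t) (ltn_ord j'); rewrite /NV /= nodevalE; by [].
case=> H1 H2 d j Hd Hj; case: (ltngtP d t) => Hdt; first by apply: H1.
  lia.
subst d; have E := nodevalE (t + s)%N (Fseg W b s t z) (Ordinal Hj); rewrite /= in E.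
have := H2 (Ordinal Hj); by rewrite /NV /= E.
Qed.

Lemma FsegSet0 s sg : FsegSet s 0 sg = setT.
Proof. by apply: funext => z; apply: propext; split => // _ d j Hd; lia. Qed.

Lemma cpx_char1 s t S : cpx W b s t S -> exists sg, S = FsegSet s t sg.
Proof.
elim: t S => [|t IH] S /=; first by move=> ->; exists (fun _ _ => HEq); rewrite FsegSet0.
case=> C [Rc [/IH [sg0 ->] [[[sg ->] _] [-> _]]]].
exists (fun d j => if d == t then (if insub j is Some j' then sg j' else HEq) else sg0 d j).
rewrite FsegSetS; congr (_ `&` _).
  by apply: FsegSet_ext => d j Hd; rewrite ifN //; apply/eqP; lia.
by congr (_ @^-1` _); congr (hcell W b _ _); apply: funext => j'; rewrite eqxx valK.
Qed.

Lemma cpx_char2 s t sg : (exists z, FsegSet s t sg z) -> cpx W b s t (FsegSet s t sg).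
Proof.
elim: t => [|t IH] [z Hz] /=; first by rewrite FsegSet0.
move: (Hz); rewrite FsegSetS => -[Hz1 Hz2].
exists (FsegSet s t sg), (hcell W b (t + s) (fun j' => sg t j')).
split; first by apply: IH; exists z.
split; first by split; [exists (fun j' => sg t j') | exists (Fseg W b s t z)].
by split; [|exists z].
Qed.

Lemma trich (v : R) : [\/ 0 < v, v < 0 | v = 0].
Proof. by case: (ltrgtP v 0) => H; [apply: Or32 | apply: Or31 | apply: Or33]. Qed.

Lemma hsat_ge c a w : hsat c a -> 0 < a -> hsat c w -> 0 <= w.
Proof. by case: c => /= Ha Hp Hw; [| move: Ha; rewrite leNgt Hp | move: Hp; rewrite Ha ltxx]. Qed.
Lemma hsat_le c a w : hsat c a -> a < 0 -> hsat c w -> w <= 0.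
Proof. by case: c => /= Ha Hp Hw; [move: Ha; rewrite leNgt Hp | | rewrite Hw]. Qed.
Lemma hsat_pos c a v : hsat c a -> 0 < a -> 0 < v -> hsat c v.
Proof. by case: c => /= Ha Hp Hv; [apply: ltW | move: Ha; rewrite leNgt Hp | move: Hp; rewrite Ha ltxx]. Qed.
Lemma hsat_neg c a v : hsat c a -> a < 0 -> v < 0 -> hsat c v.
Proof. by case: c => /= Ha Hp Hv; [move: Ha; rewrite leNgt Hp | apply: ltW | move: Hp; rewrite Ha ltxx]. Qed.
Lemma hsat0 c : hsat c 0.
Proof. by case: c => /=. Qed.

Definition exsign (v : R) : hchoice := if v == 0 then HEq else if 0 < v then HGe else HLe.
Lemma hsat_exsign v : hsat (exsign v) v.
Proof.
rewrite /exsign; case: eqP => // H; case: ifP => //= H'.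
  exact: ltW.
by rewrite leNgt H'.
Qed.
Lemma exsign_zero v w : hsat (exsign v) w -> v = 0 -> w = 0.
Proof. by move=> H E; move: H; rewrite E /exsign eqxx. Qed.

Lemma dir_span_Lam d f l (S : set 'rV[R]_(n l)) i j v :
  (forall p q, S p -> S q -> Lam d f l (q - p) i j = 0) ->
  dir_span S v -> Lam d f l v i j = 0.
Proof.
move=> H [q [vs [a [Hvs ->]]]]; rewrite Lam_sum big1 // => k _.
by have [p [p' [Hp [Hp' ->]]]] := Hvs k; rewrite H // mulr0.
Qed.

Lemma Lam_delta (d : nat -> nat -> bool) f l (u : 'rV[R]_(n l)) i j :
  Lam d f l u i j = \sum_(r < n l) u ord0 r * Lam d f l (delta_mx 0 r) i j.
Proof. by rewrite {1}(row_sum_delta u) Lam_sum. Qed.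

Lemma Lam_bound (d : nat -> nat -> bool) f l (u : 'rV[R]_(n l)) i j (e : R) : (forall r, `|u ord0 r| <= e) ->
  `|Lam d f l u i j| <= e * \sum_(r < n l) `|Lam d f l (delta_mx 0 r) i j|.
Proof.
move=> H; rewrite Lam_delta mulr_sumr; apply: le_trans (ler_norm_sum _ _ _) _.
apply: ler_sum => r _; rewrite normrM; apply: ler_wpM2r => //.
Qed.

Lemma fin_min1 (M : nat) (g : nat -> R) : (forall j, 0 < g j) ->
  exists e : R, 0 < e /\ forall j, (j < M)%N -> e <= g j.
Proof.
move=> gp; elim: M => [|M [e [e0 He]]]; first by exists 1; split => // j; lia.
exists (Num.min e (g M)); split; first by rewrite lt_min e0 gp.
move=> j Hj; rewrite ge_min; case: (ltngtP j M) => H.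
- by rewrite He.
- lia.
- by rewrite H lexx orbT.
Qed.

Lemma fin_min2 (N : nat) (M : nat -> nat) (g : nat -> nat -> R) : (forall i j, 0 < g i j) ->
  exists e : R, 0 < e /\ forall i j, (i < N)%N -> (j < M i)%N -> e <= g i j.
Proof.
move=> gp; elim: N => [|N [e [e0 He]]]; first by exists 1; split => // i j; lia.
have [e' [e0' He']] := fin_min1 (M N) (g N) (gp N).
exists (Num.min e e'); split; first by rewrite lt_min e0 e0'.
move=> i j Hi Hj; rewrite ge_min; case: (ltngtP i N) => H.
- by rewrite He.
- lia.
- by subst i; rewrite He' ?orbT.
Qed.

Lemma keep_sign (a c e K : R) : 0 < e -> 0 <= K -> e <= `|a| / (K + 1) -> `|c| <= e * K ->
  (0 < a -> 0 < a + c) /\ (a < 0 -> a + c < 0).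
Proof.
move=> e0 K0; rewrite ler_pdivlMr; last lra.
move=> H1; rewrite ler_norml => /andP [H2 H3].
split => Ha.
  by move: H1; rewrite gtr0_norm //; nra.
by move: H1; rewrite ltr0_norm //; nra.
Qed.

Section RL.
Variables (s f : nat) (sg : nat -> nat -> hchoice) (d : nat -> nat -> bool) (y0 : 'rV[R]_(n s)).
Hypothesis Hy0 : PsiSet s f sg y0.
Hypothesis Hd : forall i j, (s <= i)%N -> (i <= s + f)%N -> (j < n i.+1)%N ->
  d i j = (0 < Psi f s y0 i j).
Hypothesis Hz : forall i j, (s <= i)%N -> (i <= s + f)%N -> (j < n i.+1)%N ->
  Psi f s y0 i j = 0 -> forall y, PsiSet s f sg y -> Psi f s y i j = 0.

Lemma onP_lin y : PsiSet s f sg y -> forall i j, (i <= s + f)%N -> Psi f s y i j = Phi d f s y i j.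
Proof.
move=> Hy; apply: lin_okPsi => i j /andP [H1 H2] Hj.
rewrite /cons Hd //; last lia.
have H2' : (i <= s + f)%N by lia.
case: (trich (Psi f s y0 i j)) => H.
- by rewrite H /=; apply: (@hsat_ge _ _ _ (Hy0 i j H1 H2' Hj) H (Hy i j H1 H2' Hj)).
- rewrite ltNge (ltW H) /=; exact: (@hsat_le _ _ _ (Hy0 i j H1 H2' Hj) H (Hy i j H1 H2' Hj)).
- by rewrite H ltxx /= (Hz i j H1 H2' Hj H y Hy).
Qed.

Lemma inP y : (forall i j, (s <= i)%N -> (i <= s + f)%N -> (j < n i.+1)%N ->
   [/\ Psi f s y0 i j = 0 -> Phi d f s y i j = 0,
       0 < Psi f s y0 i j -> 0 < Phi d f s y i j &
       Psi f s y0 i j < 0 -> Phi d f s y i j < 0]) -> PsiSet s f sg y.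
Proof.
move=> H.
have E : forall i j, (i <= s + f)%N -> Psi f s y i j = Phi d f s y i j.
  apply: lin_okPhi => i j /andP [H1 H2] Hj.
  have H2' : (i <= s + f)%N by lia.
  have [Ha Hb Hc] := H i j H1 H2' Hj.
  rewrite /cons Hd //.
  case: (trich (Psi f s y0 i j)) => Hx.
  - by rewrite Hx; apply: ltW; apply: Hb.
  - by rewrite ltNge (ltW Hx) /=; apply: ltW; apply: Hc.
  - by rewrite Hx ltxx /= Ha.
move=> i j H1 H2 Hj; rewrite E //; have [Ha Hb Hc] := H i j H1 H2 Hj.
case: (trich (Psi f s y0 i j)) => Hx.
- exact: (@hsat_pos _ _ _ (Hy0 i j H1 H2 Hj) Hx (Hb Hx)).
- exact: (@hsat_neg _ _ _ (Hy0 i j H1 H2 Hj) Hx (Hc Hx)).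
- by rewrite Ha //; apply: hsat0.
Qed.

Lemma zero_dir i j : (s <= i)%N -> (i <= s + f)%N -> (j < n i.+1)%N ->
  Psi f s y0 i j = 0 -> forall v, dir_span (PsiSet s f sg) v -> Lam d f s v i j = 0.
Proof.
move=> H1 H2 Hj H0 v; apply: dir_span_Lam => p q Hp Hq.
by rewrite PhiB -!onP_lin // !(Hz i j H1 H2 Hj H0) // subrr.
Qed.

Lemma RLmain : relint (PsiSet s f sg) y0.
Proof.
split => //.
pose K i j := \sum_(r < n s) `|Lam d f s (delta_mx 0 r) i j|.
have K0 : forall i j, 0 <= K i j by move=> i j; apply: sumr_ge0 => r _.
pose g i j := if Psi f s y0 i j == 0 then 1 else `|Psi f s y0 i j| / (K i j + 1).
have gpos : forall i j, 0 < g i j.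
  move=> i j; rewrite /g; case: eqP => H //.
  by apply: divr_gt0; [rewrite normr_gt0; apply/eqP | have := K0 i j; lra].
have [e [e0 He]] := fin_min2 (s + f).+1 (fun i => n i.+1) g gpos.
exists e; split => // y [x' [Hx' Hdir]] Hclose.
apply: inP => i j H1 H2 Hj.
have Hy : Phi d f s y i j = Psi f s y0 i j + Lam d f s (y - y0) i j.
  by rewrite (onP_lin y0 Hy0) // -PhiD addrC subrK.
have Hb : `|Lam d f s (y - y0) i j| <= e * K i j.
  by apply: Lam_bound => r; rewrite !mxE; apply: ltW; apply: Hclose.
have Hg : e <= g i j by apply: He => //; lia.
split.
- move=> H0; have -> : y = x' + (y - x') by rewrite addrC subrK.
  rewrite PhiD -(onP_lin x' Hx') // (Hz i j H1 H2 Hj H0 x' Hx') add0r.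
  exact: (zero_dir i j H1 H2 Hj H0).
- move=> Hp; rewrite Hy; move: Hg; rewrite /g ifN; last by apply/eqP; move: Hp; case: (Psi f s y0 i j =P 0) => // ->; rewrite ltxx.
  by move=> Hg; have [Ha _] := @keep_sign _ _ _ _ e0 (K0 i j) Hg Hb; apply: Ha.
- move=> Hn; rewrite Hy; move: Hg; rewrite /g ifN; last by apply/eqP; move: Hn; case: (Psi f s y0 i j =P 0) => // ->; rewrite ltxx.
  by move=> Hg; have [_ Ha] := @keep_sign _ _ _ _ e0 (K0 i j) Hg Hb; apply: Ha.
Qed.

End RL.

Lemma ker_dim (k p q : nat) (B : 'M[R]_(k, p)) (A : 'M[R]_(p, q)) :
  row_free B -> (forall v : 'rV[R]_p, (v <= B)%MS <-> v *m A = 0) -> k = (p - \rank A)%N.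
Proof.
move=> Bf HB; rewrite -mxrank_ker -(eqP Bf); apply: eqmx_rank.
apply/andP; split; apply/row_subP => i.
  by rewrite sub_kermx; apply/eqP; apply/HB; apply: row_sub.
by apply/HB/eqP; rewrite -sub_kermx row_sub.
Qed.

Lemma surj_rank (p q : nat) (A : 'M[R]_(p, q)) :
  (forall beta : 'rV[R]_q, exists d : 'rV[R]_p, d *m A = beta) -> \rank A = q.
Proof.
move=> H; apply/eqP; change (row_full A); rewrite -sub1mx; apply/row_subP => i.
by have [d Hd] := H (row i 1%:M); apply/submxP; exists d.
Qed.

Lemma gen_surj l (J : {set 'I_(n l.+1)}) (yl : 'rV[R]_(n l)) :
  (let X := [set x : 'rV[R]_(n l) | forall j, j \in J -> affmap W b l x ord0 j = 0] in
   if (#|J| <= n l)%N then affdim X (n l - #|J|) else X = set0) ->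
  (forall j, j \in J -> affmap W b l yl ord0 j = 0) ->
  forall beta : 'I_(n l.+1) -> R, exists d : 'rV[R]_(n l),
    forall j, j \in J -> (d *m W l) ord0 j = beta j.
Proof.
move=> Hg Hyl beta.
pose X := [set x : 'rV[R]_(n l) | forall j, j \in J -> affmap W b l x ord0 j = 0].
have {}Hg : if (#|J| <= n l)%N then affdim X (n l - #|J|) else X = set0 := Hg.
have HX : X yl by [].
pose WJ := \matrix_(r < n l, c < #|J|) W l r (enum_val c).
have vWJ : forall (v : 'rV[R]_(n l)) (c : 'I_#|J|), (v *m WJ) ord0 c = (v *m W l) ord0 (enum_val c).
  by move=> v c; rewrite !mxE; apply: eq_bigr => r _; rewrite mxE.
move: Hg; case: ifP => HJ Hg; last by move: HX; rewrite Hg.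
have [_ [B [Bf HB]]] := Hg.
have Hdir : forall v, dir_span X v <-> v *m WJ = 0.
  move=> v; split.
    move=> [q [vs [a [Hvs ->]]]]; rewrite mulmx_suml big1 // => k _.
    have [x [y [Hx [Hy ->]]]] := Hvs k; rewrite -scalemxAl.
    suff -> : (y - x) *m WJ = 0 by rewrite scaler0.
    apply/rowP => c; rewrite vWJ [RHS]mxE.
    have := Hx _ (enum_valP c); have := Hy _ (enum_valP c).
    by rewrite /affmap mulmxBl !mxE => H1 H2; lra.
  move=> Hv; exists 1%N, (fun _ => v), (fun _ => 1); split; last by rewrite big_ord1 scale1r.
  move=> _; exists yl, (yl + v); split => //; split; last by rewrite addrC addKr.
  move=> j Hj.
  have Hv' : (v *m W l) ord0 j = 0 by rewrite -(enum_rankK_in Hj Hj) -vWJ Hv mxE.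
  have E : affmap W b l (yl + v) = affmap W b l yl + v *m W l by rewrite /affmap mulmxDl addrAC.
  by rewrite E mxE Hyl // Hv' addr0.
have Hk := @ker_dim _ _ _ B WJ Bf (fun v => iff_trans (iff_sym (HB v)) (Hdir v)).
have r1 := rank_leq_col WJ; have r2 := rank_leq_row WJ.
have Hr : \rank WJ = #|J| by lia.
have Hfull : row_full WJ by rewrite /row_full Hr.
have [D HD] := submxP (submx_full (\row_c beta (enum_val c)) Hfull).
exists D => j Hj.
by rewrite -(enum_rankK_in Hj Hj) -vWJ -HD mxE (enum_rankK_in Hj Hj).
Qed.

Lemma dir_span_mono p (S T : set 'rV[R]_p) v : S `<=` T -> dir_span S v -> dir_span T v.
Proof.
move=> ST [q [vs [a [Hvs ->]]]]; exists q, vs, a; split => // k.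
by have [x [y [Hx [Hy E]]]] := Hvs k; exists x, y; split; [apply: ST | split; [apply: ST|]].
Qed.

Lemma cons_exsign v w : hsat (exsign v) w -> cons (0 < v) w.
Proof.
rewrite /exsign /cons; case: eqP => [->|H]; first by rewrite ltxx /= => ->.
by case: ifP => //= _ ->.
Qed.

Definition isGe (c : hchoice) : bool := if c is HGe then true else false.

Lemma avg_hsat c a b' : hsat c a -> hsat c b' -> hsat c (a + 2^-1 * (b' - a)).
Proof. by case: c => /= Ha Hb; [lra | lra | rewrite Ha Hb; lra]. Qed.
Lemma avg_cons c a b' : hsat c a -> hsat c b' -> cons (isGe c) (a + 2^-1 * (b' - a)).
Proof. by rewrite /cons; case: c => /= Ha Hb; [lra | lra | rewrite Ha Hb; lra]. Qed.
Lemma avg_zero c a b' : hsat c a -> hsat c b' -> a + 2^-1 * (b' - a) = 0 -> a = 0 /\ b' = 0.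
Proof. by case: c => /= Ha Hb H; split; lra. Qed.

Lemma LamZ (d : nat -> nat -> bool) f l a (u : 'rV[R]_(n l)) i j :
  Lam d f l (a *: u) i j = a * Lam d f l u i j.
Proof. by rewrite -[a *: u]addr0 LamL Lam0 addr0. Qed.

Lemma exists_gp s f sg : (exists x, PsiSet s f sg x) -> exists x, PsiSet s f sg x /\
  forall i j, (s <= i)%N -> (i <= s + f)%N -> (j < n i.+1)%N -> Psi f s x i j = 0 ->
    forall y, PsiSet s f sg y -> Psi f s y i j = 0.
Proof.
move=> [x0 Hx0].
pose dg i j := isGe (sg i j).
have Hlin : forall y, PsiSet s f sg y -> forall i j, (i <= s + f)%N -> Psi f s y i j = Phi dg f s y i j.
  move=> y Hy; apply: lin_okPsi => i j /andP [H1 H2] Hj.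
  have := Hy i j H1 (ltnW H2) Hj; rewrite /cons /dg; case: (sg i j) => //= ->; exact: lexx.
pose T := {i : 'I_(s + f).+1 & 'I_(n i.+1)}.
have key : forall L : seq T, exists x, PsiSet s f sg x /\ forall e, e \in L -> (s <= tag e)%N ->
    Psi f s x (tag e) (tagged e) = 0 -> forall y, PsiSet s f sg y -> Psi f s y (tag e) (tagged e) = 0.
  elim => [|e L [x [Hx HL]]]; first by exists x0.
  case: (pselect (forall y, PsiSet s f sg y -> Psi f s y (tag e) (tagged e) = 0)) => He.
    exists x; split => // e' He1 H1 H0 y Hy.
    move: He1; rewrite inE => /orP [/eqP E | He']; first by rewrite E; apply: He.
    exact: (HL e' He' H1 H0 y Hy).
  move: He => /existsNP [p /not_implyP [Hp Hpe]].
  pose x' := x + 2^-1 *: (p - x).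
  have Phix' : forall i j, Phi dg f s x' i j = Phi dg f s x i j + 2^-1 * (Phi dg f s p i j - Phi dg f s x i j).
    by move=> i j; rewrite PhiD LamZ PhiB.
  have Ex' : forall i j, (s <= i)%N -> (i <= s + f)%N -> (j < n i.+1)%N ->
      Psi f s x' i j = Psi f s x i j + 2^-1 * (Psi f s p i j - Psi f s x i j).
    have Lx : forall i j, (i <= s + f)%N -> Psi f s x' i j = Phi dg f s x' i j.
      apply: lin_okPhi => i' j' /andP [H1' H2'] Hj'; rewrite Phix' -!Hlin //; try lia.
      by apply: avg_cons; [apply: Hx | apply: Hp]; lia.
    by move=> i j H1 H2 Hj; rewrite Lx // Phix' -!Hlin.
  have Hx' : PsiSet s f sg x'.
    by move=> i j H1 H2 Hj; rewrite Ex' //; apply: avg_hsat; [apply: Hx | apply: Hp].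
  exists x'; split => // e'; rewrite inE => /orP [/eqP -> | He'] H1 H0.
    have H2 : (tag e <= s + f)%N by have := ltn_ord (tag e); lia.
    move: H0; rewrite Ex' // => /(@avg_zero _ _ _ (Hx _ _ H1 H2 (ltn_ord _)) (Hp _ _ H1 H2 (ltn_ord _))).
    by case=> _ /Hpe.
  have H2 : (tag e' <= s + f)%N by have := ltn_ord (tag e'); lia.
  move: H0; rewrite Ex' // => /(@avg_zero _ _ _ (Hx _ _ H1 H2 (ltn_ord _)) (Hp _ _ H1 H2 (ltn_ord _))).
  by case=> /(HL e' He' H1).
have [x [Hx HL]] := key (enum (predT : {pred {i : 'I_(s + f).+1 & 'I_(n i.+1)}})).
exists x; split => // i j H1 H2 Hj.
have Hi : (i < (s + f).+1)%N by lia.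
exact: (HL (existT (fun i : 'I_(s + f).+1 => 'I_(n i.+1)) (Ordinal Hi) (Ordinal Hj)) (mem_enum _ _) H1).
Qed.

Lemma RLex s f sg y0 : (forall i j, (s <= i)%N -> (i <= s + f)%N -> (j < n i.+1)%N ->
   sg i j = exsign (Psi f s y0 i j)) -> relint (PsiSet s f sg) y0.
Proof.
move=> Hs.
have Hy0 : PsiSet s f sg y0 by move=> i j H1 H2 Hj; rewrite Hs //; apply: hsat_exsign.
apply: (@RLmain s f sg (fun i j => 0 < Psi f s y0 i j) y0 Hy0) => // i j H1 H2 Hj H0 y Hy.
by have := Hy i j H1 H2 Hj; rewrite Hs // => /exsign_zero; apply.
Qed.

Section Main.
Variables (m : nat) (xs : 'rV[R]_(n 0)).
Hypothesis gen : generic W b m.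
Hypothesis st : supertransversal W b m.

Definition dsx i j := 0 < Psi m 0 xs i j.

Definition Pl l := forall al : nat -> nat -> R, exists y : 'rV[R]_(n l),
  forall i j, (l <= i)%N -> (i <= m)%N -> (j < n i.+1)%N -> Psi m 0 xs i j = 0 ->
    Phi dsx m l y i j = al i j.

Lemma HPsi i j : (i <= m)%N -> Psi m 0 xs i j = nodeval i (Fpre W b i xs) j.
Proof. by move=> H; apply: (PsiFpre m 0 xs i j). Qed.

Lemma Pstep l : (l <= m)%N -> Pl l.+1 -> Pl l.
Proof.
move=> Hl IH al.
pose yl := Fpre W b l xs.
have Hyl' : forall j : 'I_(n l.+1), affmap W b l yl ord0 j = Psi m 0 xs l j.
  by move=> j; rewrite HPsi // nodevalE.
pose J : {set 'I_(n l.+1)} := finset (fun j : 'I_(n l.+1) => Psi m 0 xs l j == 0).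
have HJ : forall j, j \in J -> affmap W b l yl ord0 j = 0 by move=> j; rewrite inE Hyl' => /eqP.
have [d1 Hd1] := @gen_surj l J yl (gen l Hl J) HJ (fun j => al l j).
pose y1 := yl + d1.
have Hy1 : forall j, (j < n l.+1)%N -> Psi m 0 xs l j = 0 -> Phi dsx m l y1 l j = al l j.
  move=> j Hj H0; rewrite /Phi Gen_eq nodevalD.
  have -> : nodeval l yl j = 0 by rewrite -HPsi.
  rewrite add0r (nodeval0E l d1 (Ordinal Hj)) Hd1 // inE; apply/eqP; exact: H0.
case: (ltngtP l m) => Hlm; last first.
- exists y1 => i j H1 H2 Hj H0; have E : i = l by lia.
  by subst i; apply: Hy1.
- lia.
pose al' i j := al i j - Phi dsx m l y1 i j + Phi dsx m l.+1 0 i j.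
have [w Hw] := IH al'.
pose Cl := hcell W b l (fun j' => exsign (affmap W b l yl ord0 j')).
have HCl : Rarr W b l Cl.
  split; first by exists (fun j' => exsign (affmap W b l yl ord0 j')).
  by exists yl => j'; apply: hsat_exsign.
have ClE : Cl = PsiSet l 0 (fun i j => exsign (nodeval l yl j)).
  apply: funext => y; apply: propext; split.
  - move=> Hy i j H1 H2 Hj; have E : i = l by lia. subst i.
    have E1 := nodevalE l yl (Ordinal Hj); have E2 := nodevalE l y (Ordinal Hj).
    simpl in E1, E2; rewrite /Psi Gen_eq E1 E2; exact: (Hy (Ordinal Hj)).
  - move=> Hy j'; have := Hy l j' (leqnn l) (leq_addr 0 l) (ltn_ord j').
    by rewrite /Psi Gen_eq !nodevalE.
have relCl : relint Cl yl.
  rewrite ClE; apply: RLex => i j H1 H2 Hj; have E : i = l by lia. subst i.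
  by rewrite /Psi Gen_eq.
pose f' := (m - l.+1)%N.
pose D := PsiSet l.+1 f' (fun i j => exsign (Psi m 0 xs i j)).
pose z := Fpre W b l.+1 xs.
have Hz : forall i j, (l.+1 <= i)%N -> (i <= l.+1 + f')%N -> Psi f' l.+1 z i j = Psi m 0 xs i j.
  move=> i j H1 H2; rewrite HPsi; [exact: PsiFpre | rewrite /f' in H2; lia].
have relD : relint D z by apply: RLex => i j H1 H2 Hj; rewrite Hz.
have HD : cpx W b l.+1 (m - l) D.
  have -> : (m - l = f'.+1)%N by rewrite /f'; lia.
  have Dz := proj1 relD; rewrite /D PsiSet_Fseg in Dz *; apply: cpx_char2; by exists z.
have [u [v [Hu [Hv Ewuv]]]] := st l Hlm Cl D HCl HD yl relCl relD w.
have lin : forall a, Cl a -> layer W b l a = linlayer dsx l a.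
  move=> a Ha; apply: relu_lin => j'; rewrite /dsx -Hyl'; apply: cons_exsign; exact: (Ha j').
have [d [Hud HdJ]] : exists d : 'rV[R]_(n l), u = linlayer0 dsx l d /\
    forall j, j \in J -> (d *m W l) ord0 j = 0.
  move: Hu => [q [vs [a [Hvs ->]]]].
  have Hk : forall k, exists dk : 'rV[R]_(n l), vs k = linlayer0 dsx l dk /\
      forall j, j \in J -> (dk *m W l) ord0 j = 0.
    move=> k; have [p1 [p2 [[a1 Ha1 <-] [[a2 Ha2 <-] ->]]]] := Hvs k.
    exists (a2 - a1); split.
      rewrite (lin a1 (proj1 Ha1)) (lin a2 (proj1 Ha2)) /linlayer /linlayer0 /affmap -mulmxBl.
      by congr (_ *m _); rewrite mulmxBl opprD addrACA subrr addr0.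
    move=> j Hj.
    have Z1 : affmap W b l a1 ord0 j = 0 := @exsign_zero _ _ (proj1 Ha1 j) (HJ j Hj).
    have Z2 : affmap W b l a2 ord0 j = 0 := @exsign_zero _ _ (proj1 Ha2 j) (HJ j Hj).
    have E : affmap W b l a2 ord0 j - affmap W b l a1 ord0 j = ((a2 - a1) *m W l) ord0 j.
      by rewrite /affmap mulmxBl !mxE; ring.
    by rewrite -E Z1 Z2 subrr.
  have [dk Hdk] := fin_all_exists Hk.
  exists (\sum_(k < q) a k *: dk k); split.
    rewrite /linlayer0 !mulmx_suml; apply: eq_bigr => k _.
    by rewrite (proj1 (Hdk k)) /linlayer0 !scalemxAl.
  move=> j Hj; rewrite mulmx_suml summxE big1 // => k _.
  by rewrite -scalemxAl mxE (proj2 (Hdk k)) // mulr0.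
have Hvz : forall i j, (l.+1 <= i)%N -> (i <= m)%N -> (j < n i.+1)%N -> Psi m 0 xs i j = 0 ->
    Lam dsx m l.+1 v i j = 0.
  move=> i j H1 H2 Hj H0.
  rewrite /Lam -(@Gen_fuel (linlayer0 dsx) nodeval0 f' m l.+1 v i j); try (rewrite /f'; lia).
  change (Lam dsx f' l.+1 v i j = 0).
  have Hy0 : PsiSet l.+1 f' (fun i j => exsign (Psi m 0 xs i j)) z := proj1 relD.
  apply: (@zero_dir l.+1 f' (fun i j => exsign (Psi m 0 xs i j)) dsx z Hy0 _ _ i j H1 _ Hj).
  - by move=> i' j' H1' H2' Hj'; rewrite /dsx Hz.
  - move=> i' j' H1' H2' Hj' H0' y Hy; apply: (@exsign_zero _ _ (Hy i' j' H1' H2' Hj')).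
    by rewrite -Hz.
  - rewrite /f'; lia.
  - by rewrite Hz //; rewrite /f'; lia.
  - by apply: dir_span_mono Hv => y [].
exists (y1 + d) => i j H1 H2 Hj H0.
case: (ltngtP i l) => Hil; first lia.
- rewrite PhiD.
  have -> : Lam dsx m l d i j = Lam dsx m l.+1 u i j.
    have Hm : m = (m.-1).+1 by lia.
    rewrite /Lam {1}Hm Gen_S; last by apply/eqP; lia.
    by rewrite (@Gen_fuel _ _ m.-1 m) -?Hud //; lia.
  have Eu : u = w - v by rewrite Ewuv addrK.
  rewrite Eu LamB (Hvz i j) // subr0.
  have := PhiD dsx m l.+1 0 w i j; rewrite add0r => Ew.
  have := Hw i j Hil H2 Hj H0; rewrite /al' => Hw'.
  lra.
- subst i; rewrite /Phi Gen_eq nodevalD.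
  have := Hy1 j Hj H0; rewrite /Phi Gen_eq => ->.
  rewrite (nodeval0E l d (Ordinal Hj)) HdJ ?addr0 // inE; apply/eqP; exact: H0.
Qed.

Lemma P0 : Pl 0.
Proof.
have H : forall k, (k <= m.+1)%N -> Pl (m.+1 - k).
  elim => [_|k IH Hk].
    by rewrite subn0 => al; exists 0 => i j H1 H2; lia.
  have E : (m.+1 - k = (m.+1 - k.+1).+1)%N by lia.
  rewrite E in IH; apply: Pstep; [lia | apply: IH; lia].
by have := H m.+1 (leqnn _); rewrite subnn.
Qed.

End Main.

Lemma sig_nat_inj (m : nat) (p q : {i : 'I_m & 'I_(n i.+1)}) :
  (tag p : nat) = tag q -> (tagged p : nat) = tagged q -> p = q.
Proof.
case: p => i j; case: q => i' j' /= E1; have E : i = i' := val_inj E1.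
by subst i' => E2; rewrite (val_inj E2).
Qed.

Lemma main_thm (m : nat) : generic W b m -> supertransversal W b m ->
  forall (C : set 'rV[R]_(n 0)) (k : nat),
    canon_cpx W b m C -> affdim C k ->
    exists S : {set {i : 'I_m.+1 & 'I_(n i.+1)}},
      #|S| = (n 0 - k)%N /\
      forall pr, pr \in S <-> sign_zero W b C (tag pr) (tagged pr).
Proof.
move=> gen st C k HC [[x0 Cx0] [B [Bf HB]]].
have [sg HCsg] : exists sg, C = PsiSet 0 m sg.
  have [sg E] := @cpx_char1 0 m.+1 C HC.
  by exists sg; rewrite E PsiSet_Fseg; apply: FsegSet_ext => d j _; rewrite addn0.
subst C.
have [xs [Hxs Hzero]] := @exists_gp 0 m sg (ex_intro _ x0 Cx0).
pose ds := dsx m xs.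
have Hd : forall i j, (0 <= i)%N -> (i <= 0 + m)%N -> (j < n i.+1)%N ->
  ds i j = (0 < Psi m 0 xs i j) by [].
have Hrel : relint (PsiSet 0 m sg) xs := @RLmain 0 m sg ds xs Hxs Hd Hzero.
have HP0 := @P0 m xs gen st.
have nodePsi : forall (i : 'I_m.+1) (j : 'I_(n i.+1)) x, node_map W b i j x = Psi m 0 x i j.
  move=> i j x; rewrite /node_map -nodevalE; symmetry; apply: (PsiFpre m 0 x) => //.
  by have := ltn_ord i; lia.
pose S : {set {i : 'I_m.+1 & 'I_(n i.+1)}} :=
  finset (fun pr : {i : 'I_m.+1 & 'I_(n i.+1)} => Psi m 0 xs (tag pr) (tagged pr) == 0).
exists S; split; last first.
  move=> pr; rewrite inE; split.
  - move=> /eqP H0 x [Hx _]; rewrite nodePsi; apply: (Hzero _ _ _ _ _ H0 x Hx) => //.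
    by rewrite add0n -ltnS; apply: ltn_ord.
  - by move=> Hsz; apply/eqP; rewrite -nodePsi; exact: Hsz xs Hrel.
pose A := \matrix_(r < n 0, c < #|S|) Lam ds m 0 (delta_mx 0 r) (tag (enum_val c)) (tagged (enum_val c)).
have vA : forall (v : 'rV[R]_(n 0)) (c : 'I_#|S|),
    (v *m A) ord0 c = Lam ds m 0 v (tag (enum_val c)) (tagged (enum_val c)).
  by move=> v c; rewrite mxE [RHS]Lam_delta; apply: eq_bigr => r _; rewrite mxE.
have Ecs : forall c : 'I_#|S|, Psi m 0 xs (tag (enum_val c)) (tagged (enum_val c)) = 0.
  by move=> c; have := enum_valP c; rewrite inE => /eqP.
have Ecm : forall c : 'I_#|S|, (tag (enum_val c) <= m)%N.
  by move=> c; have := ltn_ord (tag (enum_val c)); lia.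
have rk : \rank A = #|S|.
  apply: surj_rank => beta.
  pose al i j := Phi ds m 0 0 i j + \sum_(c < #|S|) (if ((tag (enum_val c) : nat) == i) &&
       ((tagged (enum_val c) : nat) == j) then beta ord0 c else 0).
  have [x Hx] := HP0 al.
  exists x; apply/rowP => c; rewrite vA.
  have := PhiD ds m 0 0 x (tag (enum_val c)) (tagged (enum_val c)); rewrite add0r.
  have Hxc := Hx _ _ (leq0n _) (Ecm c) (ltn_ord _) (Ecs c).
  rewrite Hxc /al => E.
  have -> : Lam ds m 0 x (tag (enum_val c)) (tagged (enum_val c)) =
     \sum_(c0 < #|S|) (if ((tag (enum_val c0) : nat) == tag (enum_val c)) &&
       ((tagged (enum_val c0) : nat) == tagged (enum_val c)) then beta ord0 c0 else 0) by lra.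
  rewrite (bigD1 c) //= !eqxx /= big1 ?addr0 // => c' Hc'.
  case: ifP => // /andP [/eqP E1 /eqP E2]; exfalso; move/eqP: Hc'; apply.
  by apply: enum_val_inj; apply: sig_nat_inj.
have Hdim : forall v : 'rV[R]_(n 0), (v <= B)%MS <-> v *m A = 0.
  move=> v; split.
  - move=> /(proj2 (HB v)) Hv; apply/rowP => c; rewrite vA mxE.
    by apply: (@zero_dir 0 m sg ds xs Hxs Hd Hzero _ _ (leq0n _) (Ecm c) (ltn_ord _) (Ecs c) v Hv).
  - move=> Hv; apply/(proj1 (HB v)).
    have Lv : forall i j, (i <= m)%N -> (j < n i.+1)%N -> Psi m 0 xs i j = 0 -> Lam ds m 0 v i j = 0.
      move=> i j Hi Hj H0; have Hi' : (i < m.+1)%N by lia.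
      pose pr := existT (fun i : 'I_m.+1 => 'I_(n i.+1)) (Ordinal Hi') (Ordinal Hj).
      have prS : pr \in S by rewrite inE; apply/eqP.
      have := congr1 (fun M : 'M[R]_(1, #|S|) => M ord0 (enum_rank_in prS pr)) Hv.
      by rewrite /= vA (enum_rankK_in prS prS) mxE.
    pose K i j := `|Lam ds m 0 v i j|.
    pose g i j := if Psi m 0 xs i j == 0 then 1 else `|Psi m 0 xs i j| / (K i j + 1).
    have gpos : forall i j, 0 < g i j.
      move=> i j; rewrite /g; case: eqP => H //.
      by apply: divr_gt0; [rewrite normr_gt0; apply/eqP | have := normr_ge0 (Lam ds m 0 v i j); rewrite /K; lra].
    have [e [e0 He]] := fin_min2 m.+1 (fun i => n i.+1) g gpos.
    pose y := xs + e *: v.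
    have Hy : PsiSet 0 m sg y.
      apply: (@inP 0 m sg ds xs Hxs Hd) => i j H1 H2 Hj.
      have Ey : Phi ds m 0 y i j = Psi m 0 xs i j + e * Lam ds m 0 v i j.
        by rewrite PhiD LamZ (@onP_lin 0 m sg ds xs Hxs Hd Hzero xs Hxs).
      have Hb : `|e * Lam ds m 0 v i j| <= e * K i j by rewrite normrM gtr0_norm.
      have Hg : e <= g i j by apply: He => //; lia.
      split.
      + by move=> H0; rewrite Ey H0 Lv ?mulr0 ?addr0 //; lia.
      + move=> Hp; rewrite Ey; move: Hg; rewrite /g ifN; last by apply/eqP => E; move: Hp; rewrite E ltxx.
        by move=> Hg; apply: (proj1 (@keep_sign _ _ _ _ e0 (normr_ge0 _) Hg Hb) Hp).
      + move=> Hp; rewrite Ey; move: Hg; rewrite /g ifN; last by apply/eqP => E; move: Hp; rewrite E ltxx.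
        by move=> Hg; apply: (proj2 (@keep_sign _ _ _ _ e0 (normr_ge0 _) Hg Hb) Hp).
    exists 1%N, (fun _ => y - xs), (fun _ => e^-1); split.
      by move=> _; exists xs, y.
    by rewrite big_ord1 /y (addrC xs) addrK scalerA mulVf ?scale1r // lt0r_neq0.
have Hk := @ker_dim _ _ _ B A Bf Hdim.
have := rank_leq_row A; rewrite rk; lia.
Qed.

End Net.

Theorem lemma16 (R : realType) (m : nat) (n : nat -> nat)
  (W : forall i, 'M[R]_(n i, n i.+1)) (b : forall i, 'rV[R]_(n i.+1)) :
  n m.+1 = 1%N ->
  generic W b m ->
  supertransversal W b m ->
  forall (C : set 'rV[R]_(n 0)) (k : nat),
    canon_cpx W b m C -> affdim C k ->
    exists S : {set {i : 'I_m.+1 & 'I_(n i.+1)}},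
      #|S| = (n 0 - k)%N /\
      forall pr, pr \in S <-> sign_zero W b C (tag pr) (tagged pr).
Proof. by move=> _; apply: main_thm. Qed.
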